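(* Let $d,n\in\mathbb{N}$ be such that $h_c(d,n)$ is finite. For every $\epsilon\in(0,1]$ there exists $\gamma>0$ depending only on $\epsilon$, $d$ and $n$ such that the following holds. Let $B$ be an axis-parallel box in $\mathbb{R}^d$ and $S$ a set of $m$ points in $\mathbb{R}^d$ with $|S|\ge h_c(d,n)$. If at least $\epsilon m$ points of $S$ cannot be covered by any $n$ translated copies of $B$ (i.e., for any $n$ translates of $B$, at least $\epsilon m$ points of $S$ lie outside their union), then at least a $\gamma$ fraction of all $h_c(d,n)$-element subsets of $S$ cannot be covered by any $n$ translated copies of $B$.
   Context: An axis-parallel box in $\mathbb{R}^d$ is a set $[\alpha_1,\beta_1]\times\dots\times[\alpha_d,\beta_d]$. A family is $n$-pierceable if some set of at most $n$ points meets every member. Given families $\mathcal{F}_1,\dots,\mathcal{F}_m$, a colorful $t$-tuple is $(C_1,\dots,C_t)$ with $C_j\in\mathcal{F}_{i_j}$ for pairwise distinct $i_j$. $h_c(d,n)$ denotes the smallest positive integer $h$ such that whenever $\mathcal{F}_1,\dots,\mathcal{F}_h$ are collections of axis-parallel boxes in $\mathbb{R}^d$ with every colorful $h$-tuple $n$-pierceable, some $\mathcal{F}_i$ is $n$-pierceable (e.g. $h_c(1,n)=n+1$, $h_c(d,2)=3d$). *)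

(* Defs.v *)
From HB Require Import structures.
From mathcomp Require Import all_boot all_order all_algebra.
From mathcomp Require Import reals.
Set Implicit Arguments. Unset Strict Implicit. Unset Printing Implicit Defensive.
Import Order.TTheory GRing.Theory Num.Theory.
Local Open Scope ring_scope.

Section Defs.
Variables (R : realType) (d : nat).

Definition point := 'I_d -> R.

Record box := Box { lo : point; hi : point; lo_le_hi : forall i, lo i <= hi i }.

Definition in_box (C : box) (x : point) : Prop :=
  forall i, lo C i <= x i /\ x i <= hi C i.

Definition family := box -> Prop.

Definition pierceable (n : nat) (F : family) : Prop :=
  exists P : 'I_n -> point, forall C, F C -> exists j, in_box C (P j).

Definition hc_prop (n h : nat) : Prop :=
  forall F : 'I_h -> family,
    (forall c : 'I_h -> box, (forall i, F i (c i)) ->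
       pierceable n (fun C => exists i, C = c i)) ->
    exists i, pierceable n (F i).

Definition is_hc (n h : nat) : Prop :=
  (0 < h)%N /\ hc_prop n h /\ forall h', (0 < h')%N -> hc_prop n h' -> (h <= h')%N.

Definition covered_by_translates (B : box) (n : nat) (t : 'I_n -> point)
    (x : point) : Prop :=
  exists j, in_box B (fun i => x i - t j i).

Definition coverable (B : box) (n m : nat) (S : 'I_m -> point)
    (A : {set 'I_m}) : Prop :=
  exists t : 'I_n -> point, forall k, k \in A -> covered_by_translates B t (S k).

End Defs.

(* Main.v *)
From HB Require Import structures.
From mathcomp Require Import all_boot all_order all_algebra.
From mathcomp Require Import reals ring lra zify.
From Stdlib Require Import Classical ClassicalEpsilon.
Require Import Defs.
Set Implicit Arguments. Unset Strict Implicit. Unset Printing Implicit Defensive.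
Import Order.TTheory GRing.Theory Num.Theory.
Local Open Scope ring_scope.


Section Comb.
Variables (R : realType) (m h : nat) (P : {set 'I_m} -> bool).
Hypothesis hpos : (0 < h)%N.
Hypothesis hm : (h <= m)%N.
Hypothesis Pmono : forall A B : {set 'I_m}, A \subset B -> P A -> P B.
Hypothesis Pcol : forall W : 'I_h -> {set 'I_m}, (forall i, P (W i)) ->
  exists (c : 'I_h -> 'I_m), (forall i, c i \in W i) /\ P [set c i | i : 'I_h].

Definition agree (j : nat) (v u : 'I_h -> 'I_m) :=
  [forall k : 'I_h, (k < j)%N ==> (v k == u k)].
Definition cnt j (u : 'I_h -> 'I_m) :=
  #|[set v : {ffun 'I_h -> 'I_m} | agree j v u && P [set v k | k : 'I_h]]|.

Lemma cnt_ext j u u' : (forall k : 'I_h, (k < j)%N -> u k = u' k) ->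
  cnt j u = cnt j u'.
Proof.
move=> H; apply: eq_card => v; rewrite !inE; congr (_ && _).
apply: eq_forallb => k; case: (ltnP k j) => //= hk; by rewrite H.
Qed.

Definition upd (u : 'I_h -> 'I_m) (i : nat) (y : 'I_m) :=
  fun k : 'I_h => if (k == i :> nat) then y else u k.

Lemma agreeS i (hi : (i < h)%N) v u y :
  agree i.+1 v (upd u i y) = agree i v u && (v (Ordinal hi) == y).
Proof.
apply/forallP/andP.
- move=> H; split.
  + apply/forallP => k; apply/implyP => hk.
    have := implyP (H k); rewrite ltnS (ltnW hk) /upd (ltn_eqF hk).
    by move=> /(_ isT).
  + by have := implyP (H (Ordinal hi)); rewrite ltnSn /upd eqxx => /(_ isT).
- move=> [H1 H2] k; apply/implyP; rewrite ltnS leq_eqVlt => /orP [/eqP ek|lk].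
  + have -> : k = Ordinal hi by apply: val_inj.
    by rewrite /upd eqxx.
  + by rewrite /upd (ltn_eqF lk); exact: (implyP (forallP H1 k)).
Qed.

Lemma cnt_split i u (hi : (i < h)%N) :
  (\sum_(y : 'I_m) cnt i.+1 (upd u i y) = cnt i u)%N.
Proof.
rewrite /cnt -sum1_card (partition_big (fun v : {ffun 'I_h -> 'I_m} => v (Ordinal hi)) predT) //=.
apply: eq_bigr => y _; rewrite -sum1_card; apply: eq_bigl => v.
by rewrite !inE agreeS andbAC.
Qed.


Variable eps : R.
Hypothesis eps_gt0 : 0 < eps.
Hypothesis Pbig : forall D : {set 'I_m}, #|~: D|%:R < eps * m%:R -> P D.

Definition aa := eps / (2 * (h ^ h)%N%:R).
Definition K (i : nat) := (aa * m%:R) ^+ (h - i).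

Lemma m_gt0 : (0 < m)%N. Proof. exact: leq_trans hpos hm. Qed.

Lemma hh_gt0 : (0 < h ^ h)%N. Proof. by rewrite expn_gt0 hpos. Qed.

Lemma aa_gt0 : 0 < aa.
Proof. by rewrite /aa divr_gt0 // mulr_gt0 // ltr0n hh_gt0. Qed.

Lemma am_gt0 : 0 < aa * m%:R.
Proof. by rewrite mulr_gt0 ?aa_gt0 // ltr0n m_gt0. Qed.

Lemma K_gt0 i : 0 < K i.
Proof. by rewrite /K exprn_gt0 // am_gt0. Qed.

Lemma KS i : (i < h)%N -> K i = aa * m%:R * K i.+1.
Proof. by move=> hi; rewrite /K -exprS subnSK. Qed.

Definition inv i (C : 'I_h -> 'I_h -> 'I_m) :=
  (forall k : 'I_h, (k < i)%N -> P [set C k j | j : 'I_h]) /\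
  forall s : 'I_h -> 'I_h, (cnt i (fun k => C k (s k)))%:R < K i.

Lemma Bbound i (hi : (i < h)%N) (u : 'I_h -> 'I_m) :
  (cnt i u)%:R < K i ->
  #|[set y : 'I_m | ~~ ((cnt i.+1 (upd u i y))%:R < K i.+1)]|%:R <= aa * m%:R.
Proof.
move=> Hc; set B := [set y | _].
have Hs : \sum_(y : 'I_m) ((cnt i.+1 (upd u i y))%:R : R) < aa * m%:R * K i.+1.
  by rewrite -natr_sum cnt_split; move: Hc; rewrite (KS hi).
have H1 : #|B|%:R * K i.+1 <= \sum_(y : 'I_m) ((cnt i.+1 (upd u i y))%:R : R).
  rewrite (bigID (mem B)) /= -[X in X <= _]addr0; apply: lerD.
    rewrite mulr_natl -sumr_const; apply: ler_sum => y; rewrite inE.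
    by rewrite -leNgt.
  by apply: sumr_ge0 => y _; rewrite ler0n.
have := le_lt_trans H1 Hs; rewrite ltr_pM2r ?K_gt0 //; exact: ltW.
Qed.

Lemma card_cover (T S : finType) (A : {set T}) (B : S -> {set T}) :
  (forall y, y \in A -> exists s, y \in B s) ->
  (#|A| <= \sum_(s : S) #|B s|)%N.
Proof.
move=> H; rewrite -sum1_card.
apply: (@leq_trans (\sum_(y in A) \sum_(s : S) (y \in B s : nat))).
  apply: leq_sum => y yA; have [s ys] := H y yA.
  by rewrite (bigD1 s) //= ys leq_addr.
apply: (@leq_trans (\sum_(y : T) \sum_(s : S) (y \in B s : nat))).
  by rewrite [X in (_ <= X)%N](bigID (mem A)) /= leq_addr.
rewrite exchange_big; apply: leq_sum => s _.
by rewrite -sum1_card [X in (_ <= X)%N]big_mkcond /=; apply: leq_sum => y _; case: (y \in B s).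
Qed.

Lemma inv_step i C : (i < h)%N -> inv i C -> exists C', inv i.+1 C'.
Proof.
move=> hi [HP Hc].
pose B (s : {ffun 'I_h -> 'I_h}) :=
  [set y : 'I_m | ~~ ((cnt i.+1 (upd (fun k => C k (s k)) i y))%:R < K i.+1)].
pose D := [set y : 'I_m | [forall s, y \notin B s]].
have HD : P D.
  apply: Pbig.
  have H1 : (#|~: D| <= \sum_(s : {ffun 'I_h -> 'I_h}) #|B s|)%N.
    apply: card_cover => y; rewrite !inE negb_forall => /existsP [s].
    by rewrite negbK => ys; exists s.
  have H2 : (#|~: D|%:R : R) <= eps * m%:R / 2.
    apply: (le_trans (y := ((\sum_(s : {ffun 'I_h -> 'I_h}) #|B s|)%N)%:R)); first by rewrite ler_nat.
    rewrite natr_sum.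
    apply: (le_trans (y := \sum_(s : {ffun 'I_h -> 'I_h}) (aa * m%:R))).
      by apply: ler_sum => s _; exact: (Bbound hi (Hc s)).
    rewrite sumr_const card_ffun !card_ord -mulr_natl /aa.
    have hh : ((h ^ h)%N%:R : R) != 0 by rewrite pnatr_eq0 -lt0n hh_gt0.
    rewrite le_eqVlt; apply/orP; left; apply/eqP; field; by rewrite hh.
  apply: (le_lt_trans H2).
  have : 0 < eps * m%:R by rewrite mulr_gt0 // ltr0n m_gt0.
  move=> ?; lra.
have [c [cD cP]] := @Pcol (fun _ : 'I_h => D) (fun _ => HD).
pose i0 := Ordinal hi.
exists (fun k : 'I_h => if (k == i :> nat) then c else C k); split.
  move=> k; rewrite ltnS leq_eqVlt => /orP [ek|lk].
    by rewrite ek.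
  by rewrite (ltn_eqF lk); apply: HP.
move=> s.
have := cD (s i0); rewrite inE => /forallP /(_ [ffun k => s k]).
rewrite inE negbK => H.
rewrite (@cnt_ext _ _ (upd (fun k => C k ([ffun k => s k] k)) i (c (s i0)))) //.
move=> k _; rewrite /upd ffunE; case: eqP => // ek.
by have -> : k = i0 by apply: val_inj.
Qed.


Lemma inv_all (u : 'I_h -> 'I_m) : (cnt 0 u)%:R < K 0 ->
  forall i, (i <= h)%N -> exists C, inv i C.
Proof.
move=> H0; elim=> [_|i IH hi].
  pose x0 : 'I_m := Ordinal m_gt0.
  exists (fun _ _ => x0); split => // s.
have [C HC] := IH (ltnW hi).
exact: inv_step hi HC.
Qed.

Lemma count_bad (u : 'I_h -> 'I_m) : K 0 <= (cnt 0 u)%:R.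
Proof.
rewrite leNgt; apply/negP => H0.
have [C [HP Hc]] := inv_all H0 (leqnn h).
have [c [cW cP]] := @Pcol (fun k => [set C k j | j : 'I_h]) (fun k => HP k (ltn_ord k)).
pose s (k : 'I_h) := if [pick j | c k == C k j] is Some j then j else k.
have Hs : forall k, C k (s k) = c k.
  move=> k; rewrite /s; case: pickP => [j /eqP -> //|none].
  have /imsetP [j _ ej] := cW k.
  by have := none j; rewrite ej eqxx.
have := Hc s; rewrite /K subnn expr0.
have : (0 < cnt h (fun k => C k (s k)))%N.
  rewrite card_gt0; apply/set0Pn; exists [ffun k => c k]; rewrite inE.
  apply/andP; split.
    by apply/forallP => k; apply/implyP => _; rewrite ffunE Hs.
  suff -> : [set [ffun k => c k] k | k : 'I_h] = [set c k | k : 'I_h] by [].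
  by apply: eq_imset => k; rewrite ffunE.
move=> Hpos; rewrite -(ler_nat R 1) in Hpos.
move=> H; lra.
Qed.


Lemma extend (Y : {set 'I_m}) : (#|Y| <= h)%N ->
  exists X : {set 'I_m}, (Y \subset X) && (#|X| == h).
Proof.
move e: (h - #|Y|)%N => k; elim: k Y e => [|k IH] Y e hY.
  exists Y; rewrite subxx /=; apply/eqP/anti_leq; rewrite hY /= -subn_eq0; apply/eqP.
  exact: e.
case: (pickP [pred z | z \notin Y]) => [z /= zY | none].
  have [X /andP [h1 h2]] : exists X : {set 'I_m}, (z |: Y \subset X) && (#|X| == h).
    apply: IH; rewrite cardsU1 zY /=; [by rewrite add1n subnS e | by rewrite add1n -subn_gt0 e].
  by exists X; rewrite h2 andbT; apply: subset_trans h1; apply: subsetUr.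
have : Y = setT by apply/setP => z; have := none z; rewrite /= inE; case: (z \in Y).
move=> eY; move: e; rewrite eY cardsT card_ord.
move: hm; lia.
Qed.

Definition ext (v : {ffun 'I_h -> 'I_m}) :=
  if [pick X : {set 'I_m} | ([set v k | k : 'I_h] \subset X) && (#|X| == h)]
  is Some X then X else set0.

Lemma ext_spec (v : {ffun 'I_h -> 'I_m}) : ([set v k | k : 'I_h] \subset ext v) && (#|ext v| == h).
Proof.
rewrite /ext; case: pickP => [X -> //|none].
have [X HX] := @extend [set v k | k : 'I_h] (leq_trans (leq_imset_card _ _) (eq_leq (card_ord h))).
by have := none X; rewrite HX.
Qed.

Lemma fam_bound : exists Fam : {set {set 'I_m}},
  K 0 <= ((#|Fam| * h ^ h)%N)%:R /\ forall A, A \in Fam -> #|A| = h /\ P A.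
Proof.
pose Bad := [set v : {ffun 'I_h -> 'I_m} | P [set v k | k : 'I_h]].
exists [set ext v | v in Bad]; split; last first.
  move=> A /imsetP [v]; rewrite inE => Pv ->.
  have /andP [h1 /eqP h2] := ext_spec v.
  by split => //; apply: Pmono Pv.
pose x0 : 'I_m := Ordinal m_gt0.
apply: (le_trans (count_bad (fun _ => x0))); rewrite ler_nat.
have eB : cnt 0 (fun _ => x0) = #|Bad|.
  apply: eq_card => v; rewrite !inE.
  suff -> : agree 0 v (fun _ => x0) by [].
  by apply/forallP => k; rewrite ltn0.
rewrite eB.
rewrite -sum1_card (partition_big ext (mem [set ext v | v in Bad])) /=; last first.
  by move=> v vB; apply: imset_f.
rewrite -sum_nat_const; apply: leq_sum => X /imsetP [w _ eXw].
rewrite sum1dep_card.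
apply: (@leq_trans #|[set f : {ffun 'I_h -> 'I_m} | f \in ffun_on X]|).
  apply: subset_leq_card; apply/subsetP => v; rewrite !inE => /andP [_ /eqP eX].
  apply/ffun_onP => k; rewrite -eX.
  have /andP [h1 _] := ext_spec v.
  by apply: (subsetP h1); apply: imset_f.
rewrite cardsE card_ffun_on card_ord.
by rewrite eXw; have /andP [_ /eqP ->] := ext_spec w.
Qed.

End Comb.

Lemma bin_le_exp (m h : nat) : ('C(m, h) <= m ^ h)%N.
Proof.
apply: (@leq_trans ('C(m, h) * h`!)); first by rewrite leq_pmulr // fact_gt0.
rewrite bin_ffact ffact_prod.
apply: (@leq_trans (\prod_(i < h) m)); first by apply: leq_prod => i _; rewrite leq_subr.
by rewrite prod_nat_const card_ord.
Qed.

Definition pb (Q : Prop) : bool := if excluded_middle_informative Q then true else false.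
Lemma pbP (Q : Prop) : pb Q <-> Q.
Proof. by rewrite /pb; case: excluded_middle_informative. Qed.

Section Geo.
Variables (R : realType) (d : nat) (B : box R d) (n m : nat) (S : 'I_m -> point R d).

Definition box_of (x : point R d) : box R d.
Proof.
refine (@Box R d (fun i => x i - hi B i) (fun i => x i - lo B i) _).
by move=> i; have := lo_le_hi B i; lra.
Defined.

Lemma in_box_of (x t : point R d) : in_box (box_of x) t <-> in_box B (fun i => x i - t i).
Proof.
rewrite /in_box /=; split => H i; have [h1 h2] := H i; split; lra.
Qed.

Lemma cov_mono (A A' : {set 'I_m}) : A \subset A' ->
  coverable B n S A' -> coverable B n S A.
Proof.
move=> sub [t Ht]; exists t => k kA; apply: Ht; exact: (subsetP sub).
Qed.

Lemma colorful (h : nat) : hc_prop R d n h ->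
  forall W : 'I_h -> {set 'I_m}, (forall i, ~ coverable B n S (W i)) ->
  exists c : 'I_h -> 'I_m, (forall i, c i \in W i) /\
     ~ coverable B n S [set c i | i : 'I_h].
Proof.
move=> Hhc W HW.
pose F (i : 'I_h) : family R d := fun C => exists k, k \in W i /\ C = box_of (S k).
have notp : forall i, ~ pierceable n (F i).
  move=> i [Pt HP]; apply: (HW i); exists Pt => k kW.
  have [j Hj] := HP (box_of (S k)) (ex_intro _ k (conj kW erefl)).
  by exists j; apply/in_box_of.
have : ~ (forall c : 'I_h -> box R d, (forall i, F i (c i)) ->
            pierceable n (fun C => exists i, C = c i)).
  by move=> H; have [i Hi] := Hhc F H; exact: notp i Hi.
move=> Hn; have [c Hc0] := not_all_ex_not _ _ Hn; have [Hc Hnp] := imply_to_and _ _ Hc0.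
pose kf (i : 'I_h) := proj1_sig (constructive_indefinite_description _ (Hc i)).
have kfP : forall i, kf i \in W i /\ c i = box_of (S (kf i)).
  by move=> i; rewrite /kf; case: constructive_indefinite_description.
exists kf; split; first by move=> i; case: (kfP i).
move=> [t Ht]; apply: Hnp; exists t => C [i ->].
have [_ ->] := kfP i.
have ki : kf i \in [set kf j | j : 'I_h] by apply/imsetP; exists i.
have [j Hj] := Ht (kf i) ki.
by exists j; apply/in_box_of.
Qed.

End Geo.

Theorem lemma6 (R : realType) (d n h : nat) :
  is_hc R d n h ->
  forall eps : R, 0 < eps -> eps <= 1 ->
  exists gamma : R, 0 < gamma /\
    forall (B : box R d) (m : nat) (S : 'I_m -> point R d),
      injective S -> (h <= m)%N ->
      (forall t : 'I_n -> point R d,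
         exists A : {set 'I_m}, eps * m%:R <= #|A|%:R /\
           forall k, k \in A -> ~ covered_by_translates B t (S k)) ->
      exists Fam : {set {set 'I_m}},
        gamma * 'C(m, h)%:R <= #|Fam|%:R /\
        forall A, A \in Fam -> #|A| = h /\ ~ coverable B n S A.
Proof.
move=> [hpos [Hhc _]] eps eps0 _.
pose a := eps / (2 * (h ^ h)%N%:R).
have hh0 : (0 : R) < (h ^ h)%N%:R by rewrite ltr0n expn_gt0 hpos.
have a0 : 0 < a by rewrite /a divr_gt0 // mulr_gt0.
exists (a ^+ h / (h ^ h)%N%:R); split; first by rewrite divr_gt0 // exprn_gt0.
move=> B m S _ hm Hyp.
pose P (A : {set 'I_m}) := pb (~ coverable B n S A).
have Pmono : forall A A' : {set 'I_m}, A \subset A' -> P A -> P A'.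
  move=> A A' sub /pbP HA; apply/pbP => HA'; exact: HA (cov_mono sub HA').
have Pcol : forall W : 'I_h -> {set 'I_m}, (forall i, P (W i)) ->
    exists c : 'I_h -> 'I_m, (forall i, c i \in W i) /\ P [set c i | i : 'I_h].
  move=> W HW.
  have [c [h1 h2]] := colorful Hhc (fun i => proj1 (pbP _) (HW i)).
  by exists c; split => //; apply/pbP.
have Pbig : forall D : {set 'I_m}, #|~: D|%:R < eps * m%:R -> P D.
  move=> D HD; apply/pbP => [[t Ht]].
  have [A [HA HAu]] := Hyp t.
  have sub : A \subset ~: D.
    apply/subsetP => k kA; rewrite inE; apply/negP => kD.
    exact: HAu k kA (Ht k kD).
  have := subset_leq_card sub; rewrite -(ler_nat R) => Hle.
  have := le_trans HA Hle; rewrite leNgt HD //.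
have [Fam [HF HFam]] := fam_bound hpos hm Pmono Pcol eps0 Pbig.
exists Fam; split; last first.
  by move=> A /HFam [h1 /pbP h2].
move: HF; rewrite /K subn0 natrM exprMn => HF.
have hb : ('C(m, h)%:R : R) <= (m ^ h)%N%:R by rewrite ler_nat bin_le_exp.
rewrite natrX in hb.
have e1 : a ^+ h / (h ^ h)%N%:R * 'C(m, h)%:R <= a ^+ h / (h ^ h)%N%:R * m%:R ^+ h.
  by rewrite ler_wpM2l // divr_ge0 // ?exprn_ge0 // ltW.
apply: (le_trans e1).
rewrite -(ler_pM2r hh0).
have -> : a ^+ h / (h ^ h)%N%:R * m%:R ^+ h * (h ^ h)%N%:R = a ^+ h * m%:R ^+ h.
  by field; rewrite gt_eqF.
exact: HF.
Qed.
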